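(* Let $\{i,j,k\}=\{1,2,3\}$ and $n\ge0$. Then: 1. The atomic element $a^{ij}_n$ is $\varphi_i$-homomorphic and $\varphi_j$-homomorphic. 2. The atomic element $A^{ij}_n$ is $\varphi_i$-homomorphic. 3. The atomic element $A^{ij}_n$ is $(\varphi_j,y_k)$-homomorphic.
   Context: $D^{2,2,2}$ is the modular lattice generated by $x_1,y_1,x_2,y_2,x_3,y_3$ subject only to $x_i\subseteq y_i$ ($i=1,2,3$), with a greatest element $I$ adjoined. Meet is written $ab$, join $a+b$. Atomic elements: for distinct $i,j$, let $k$ denote the third index. Define - $a^{ij}_0=I$ and $a^{ij}_n=x_i+y_ja^{jk}_{n-1}$ for $n\ge1$; - $A^{ij}_0=I$ and $A^{ij}_n=y_i+x_jA^{ki}_{n-1}$ for $n\ge1$. A representation $\rho$ of $D^{2,2,2}$ in a finite-dimensional vector space $X_0$ is a lattice morphism from $D^{2,2,2}$ to the subspace lattice of $X_0$, with $\rho(I)=X_0$. Write $X_i=\rho(x_i)\subseteq Y_i=\rho(y_i)$. Put $R=Y_1\oplus Y_2\oplus Y_3$ and $X^1_0=\{(\eta_1,\eta_2,\eta_3)\in R:\sum\eta_i=0\}$. Let $G'_i\subseteq R$ be the triples with $i$-th coordinate in $X_i$, and $H'_i\subseteq R$ the triples with $i$-th coordinate $0$. $\Phi^+\rho$ is the representation in $X^1_0$ with $\Phi^+\rho(y_i)=G'_i\cap X^1_0$, $\Phi^+\rho(x_i)=H'_i\cap X^1_0$, $\Phi^+\rho(I)=X^1_0$. The elementary map $\varphi_i:X^1_0\to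 X_0$ is $(\eta_1,\eta_2,\eta_3)\mapsto\eta_i$; $\varphi_i(S)$ denotes the image of a subspace $S$. An element $a\in D^{2,2,2}$ is $\varphi_i$-homomorphic if, for every representation $\rho$ and every $p\in D^{2,2,2}$, $$\varphi_i(\Phi^+\rho(ap))=\varphi_i(\Phi^+\rho(a))\cap\varphi_i(\Phi^+\rho(p)).$$ An element $a$ is $(\varphi_i,y_k)$-homomorphic if, for every representation $\rho$ and every $p\in D^{2,2,2}$ with $p\subseteq y_k$, $$\varphi_i(\Phi^+\rho(ap))=\varphi_i(\Phi^+\rho(y_ka))\cap\varphi_i(\Phi^+\rho(p)).$$ *)

(* Defs.v *)
From HB Require Import structures.
From mathcomp Require Import all_boot all_algebra.

Set Implicit Arguments.
Unset Strict Implicit.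
Unset Printing Implicit Defensive.

Import GRing.Theory.
Local Open Scope ring_scope.

(* Terms over the generators x_1,y_1,x_2,y_2,x_3,y_3 and the adjoined  *)
(* top element I (indices 1,2,3 are the ordinals 0,1,2 of 'I_3).       *)
Inductive term : Type :=
| Gx of 'I_3
| Gy of 'I_3
| Top
| Meet of term & term
| Join of term & term .

(* Equality in D^{2,2,2} (with I adjoined): the least congruence on     *)
(* terms containing the modular-lattice axioms, the relations          *)
(* x_i <= y_i, and the axiom that I is the greatest element.           *)
Inductive eqD : term -> term -> Prop :=
| eqD_refl a : eqD a a
| eqD_sym a b : eqD a b -> eqD b a
| eqD_trans a b c : eqD a b -> eqD b c -> eqD a c
| eqD_Meet a a' b b' : eqD a a' -> eqD b b' -> eqD (Meet a b) (Meet a' b')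
| eqD_Join a a' b b' : eqD a a' -> eqD b b' -> eqD (Join a b) (Join a' b')
| eqD_MeetC a b : eqD (Meet a b) (Meet b a)
| eqD_JoinC a b : eqD (Join a b) (Join b a)
| eqD_MeetA a b c : eqD (Meet a (Meet b c)) (Meet (Meet a b) c)
| eqD_JoinA a b c : eqD (Join a (Join b c)) (Join (Join a b) c)
| eqD_MeetJ a b : eqD (Meet a (Join a b)) a
| eqD_JoinM a b : eqD (Join a (Meet a b)) a
| eqD_modular a b c :
    eqD (Join (Meet a b) (Meet a c)) (Meet a (Join b (Meet a c)))
| eqD_xy i : eqD (Meet (Gx i) (Gy i)) (Gx i)
| eqD_top a : eqD (Meet a Top) a.

Definition leD (p q : term) : Prop := eqD (Meet p q) p.

(* Atomic elements.  For distinct i, j with third index k:              *)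
(*   a_at n i j k = a^{ij}_n,  A_at n i j k = A^{ij}_n.                  *)
(* (the third index of (j,k) is i, that of (k,i) is j)                  *)
Fixpoint a_at (n : nat) (i j k : 'I_3) : term :=
  match n with
  | 0 => Top
  | n'.+1 => Join (Gx i) (Meet (Gy j) (a_at n' j k i))
  end.

Fixpoint A_at (n : nat) (i j k : 'I_3) : term :=
  match n with
  | 0 => Top
  | n'.+1 => Join (Gy i) (Meet (Gx j) (A_at n' k i j))
  end.

(* Evaluation of terms in a subspace lattice: [top] is the space in     *)
(* which the representation lives, [gx]/[gy] the images of x_i / y_i.  *)
Fixpoint eval (F : fieldType) (vT : vectType F) (top : {vspace vT})
    (gx gy : 'I_3 -> {vspace vT}) (t : term) : {vspace vT} :=
  match t with
  | Gx i => gx i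
  | Gy i => gy i
  | Top => top
  | Meet a b => (eval top gx gy a :&: eval top gx gy b)%VS
  | Join a b => (eval top gx gy a + eval top gx gy b)%VS
  end.

(* the representation rho in X_0 = fullv with rho(x_i)=X i, rho(y_i)=Y i *)
Definition rep_eval (F : fieldType) (vT : vectType F)
    (X Y : 'I_3 -> {vspace vT}) (t : term) : {vspace vT} :=
  eval fullv X Y t.

(* The construction Phi^+ : everything lives in X_0 ⊕ X_0 ⊕ X_0.       *)
Section PhiPlus.
Variables (F : fieldType) (vT : vectType F).

Definition triple : vectType F := (vT * vT * vT)%type.

Definition coord3 (l : 'I_3) (w : triple) : vT :=
  match val l with
  | 0 => w.1.1
  | 1 => w.1.2
  | _ => w.2
  end.

Definition varphi (l : 'I_3) : 'Hom(triple, vT) := linfun (coord3 l).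

Definition sum3 : 'Hom(triple, vT) := linfun (fun w : triple => w.1.1 + w.1.2 + w.2).

Variables (X Y : 'I_3 -> {vspace vT}).

(* R = Y_1 ⊕ Y_2 ⊕ Y_3 *)
Definition Rsp : {vspace triple} := (\bigcap_(l < 3) (varphi l @^-1: Y l))%VS.
Definition X10 : {vspace triple} := (Rsp :&: lker sum3)%VS.
Definition Gp (l : 'I_3) : {vspace triple} := (Rsp :&: (varphi l @^-1: X l))%VS.
Definition Hp (l : 'I_3) : {vspace triple} := (Rsp :&: lker (varphi l))%VS.

Definition PhiPlus (t : term) : {vspace triple} :=
  eval X10 (fun l => Hp l :&: X10)%VS (fun l => Gp l :&: X10)%VS t.

End PhiPlus.

Arguments varphi {F vT} l.
Arguments PhiPlus {F vT} X Y t.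

Definition phi_hom (i : 'I_3) (a : term) : Prop :=
  forall (F : fieldType) (vT : vectType F) (X Y : 'I_3 -> {vspace vT}),
    (forall l, (X l <= Y l)%VS) ->
    forall p : term,
      (varphi i @: PhiPlus X Y (Meet a p))%VS =
      ((varphi i @: PhiPlus X Y a) :&: (varphi i @: PhiPlus X Y p))%VS.

Definition phi_y_hom (i k : 'I_3) (a : term) : Prop :=
  forall (F : fieldType) (vT : vectType F) (X Y : 'I_3 -> {vspace vT}),
    (forall l, (X l <= Y l)%VS) ->
    forall p : term, leD p (Gy k) ->
      (varphi i @: PhiPlus X Y (Meet a p))%VS =
      ((varphi i @: PhiPlus X Y (Meet (Gy k) a)) :&: (varphi i @: PhiPlus X Y p))%VS.

(* Main.v *)
Require Import Defs.
From mathcomp Require Import all_boot all_algebra.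

Set Implicit Arguments.
Unset Strict Implicit.
Unset Printing Implicit Defensive.
Import GRing.Theory.
Local Open Scope ring_scope.

Section Gen.
Variables (F : fieldType) (vT : vectType F).

Lemma modular_cap (a b d : {vspace vT}) :
  (d <= a)%VS -> (a :&: (b + d))%VS = (a :&: b + d)%VS.
Proof.
move=> da; apply/eqP; rewrite eqEsubv; apply/andP; split.
- apply/subvP => v /memv_capP [va /memv_addP [x xb [y yd ev]]].
  have ya : y \in a by exact: (subvP da).
  have xa : x \in a.
    have -> : x = v - y by rewrite ev addrK.
    by rewrite rpredB.
  by rewrite ev; apply: memv_add => //; apply/memv_capP.
- rewrite subv_add; apply/andP; split.
  + by rewrite subv_cap capvSl /= (subv_trans (capvSr _ _) (addvSl _ _)).
  + by rewrite subv_cap da addvSr.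
Qed.

Variables (top : {vspace vT}) (gx gy : 'I_3 -> {vspace vT}).
Hypothesis hxy : forall l, (gx l <= gy l)%VS.
Hypothesis hxt : forall l, (gx l <= top)%VS.
Hypothesis hyt : forall l, (gy l <= top)%VS.

Lemma eval_top t : (eval top gx gy t <= top)%VS.
Proof.
elim: t => [l|l| |a iha b ihb|a iha b ihb] /=; rewrite ?subvv //.
- exact: subv_trans (capvSl _ _) iha.
- by rewrite subv_add iha ihb.
Qed.

Lemma eval_sound a b : eqD a b -> eval top gx gy a = eval top gx gy b.
Proof.
elim=> {a b} /=.
- by [].
- by move=> a b _ ->.
- by move=> a b c _ -> _ ->.
- by move=> a a' b b' _ -> _ ->.
- by move=> a a' b b' _ -> _ ->.
- by move=> a b; rewrite capvC.
- by move=> a b; rewrite addvC.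
- by move=> a b c; rewrite capvA.
- by move=> a b c; rewrite addvA.
- move=> a b; apply/eqP; rewrite eqEsubv capvSl /= subv_cap subvv.
  exact: addvSl.
- move=> a b; apply/eqP; rewrite eqEsubv addvSl andbT subv_add subvv.
  exact: capvSl.
- move=> a b c; rewrite modular_cap //; exact: capvSl.
- move=> l; apply/eqP; rewrite eqEsubv capvSl /= subv_cap subvv; exact: hxy.
- move=> a; apply/eqP; rewrite eqEsubv capvSl /= subv_cap subvv.
  exact: eval_top.
Qed.

End Gen.

Lemma img_cap (F : fieldType) (aT rT : vectType F) (f : 'Hom(aT, rT))
  (U V W : {vspace aT}) :
  (U <= W)%VS -> (V <= W)%VS -> (lker f :&: W <= U)%VS ->
  (f @: (U :&: V))%VS = (f @: U :&: f @: V)%VS.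
Proof.
move=> UW VW kU; apply/eqP; rewrite eqEsubv; apply/andP; split.
  by rewrite subv_cap !limgS ?capvSl ?capvSr.
apply/subvP => z /memv_capP [/memv_imgP [u uU ->] /memv_imgP [w wV e]].
have uwU : u - w \in U.
  apply: (subvP kU); apply/memv_capP; split.
    rewrite memv_ker raddfB subr_eq0; apply/eqP; exact: e.
  by apply: rpredB; [apply: (subvP UW) | apply: (subvP VW)].
have wU : w \in U.
  have -> : w = u - (u - w) by rewrite opprB addrC subrK.
  by rewrite rpredB.
by rewrite e; apply: memv_img; apply/memv_capP.
Qed.

Section Phi.
Variables (F : fieldType) (vT : vectType F) (X Y : 'I_3 -> {vspace vT}).

Lemma PhiMeet a b : PhiPlus X Y (Meet a b) = (PhiPlus X Y a :&: PhiPlus X Y b)%VS.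
Proof. by []. Qed.
Lemma PhiJoin a b : PhiPlus X Y (Join a b) = (PhiPlus X Y a + PhiPlus X Y b)%VS.
Proof. by []. Qed.

Lemma Phi_hxy l : (PhiPlus X Y (Gx l) <= PhiPlus X Y (Gy l))%VS.
Proof.
rewrite /PhiPlus /=; apply: capvS (subvv _); rewrite /Hp /Gp; apply: capvS (subvv _) _.
by rewrite -lpreim0 lpreimS // sub0v.
Qed.

Lemma Phi_top t : (PhiPlus X Y t <= PhiPlus X Y Top)%VS.
Proof. by apply: eval_top => l; apply: capvSr. Qed.

Lemma Phi_sound a b : eqD a b -> PhiPlus X Y a = PhiPlus X Y b.
Proof.
apply: eval_sound => l; last 2 first; try exact: capvSr.
exact: Phi_hxy.
Qed.

Lemma kerX l : (lker (varphi l) :&: PhiPlus X Y Top <= PhiPlus X Y (Gx l))%VS.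
Proof.
rewrite /PhiPlus /= subv_cap capvSr andbT /Hp subv_cap capvSl andbT.
apply: subv_trans (capvSr _ _) _; rewrite /X10; exact: capvSl.
Qed.

End Phi.

Lemma phi_hom_of l a :
  (forall (F : fieldType) (vT : vectType F) (X Y : 'I_3 -> {vspace vT}),
      (PhiPlus X Y (Gx l) <= PhiPlus X Y a)%VS) -> phi_hom l a.
Proof.
move=> H F vT X Y _ p; rewrite PhiMeet.
apply: (img_cap (W := PhiPlus X Y Top)); rewrite ?Phi_top //.
exact: subv_trans (kerX _ _ _) (H _ _ _ _).
Qed.

Theorem mainTheorem11 (i j k : 'I_3) (n : nat) :
  i != j -> j != k -> i != k ->
  [/\ phi_hom i (a_at n i j k), phi_hom j (a_at n i j k),
      phi_hom i (A_at n i j k) & phi_y_hom j k (A_at n i j k)].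
Proof.
move=> _ _ _; split.
- apply: phi_hom_of => F vT X Y; case: n => [|n]; first exact: Phi_top.
  by rewrite PhiJoin addvSl.
- apply: phi_hom_of => F vT X Y; case: n => [|n]; first exact: Phi_top.
  rewrite PhiJoin; apply: subv_trans (addvSr _ _); rewrite PhiMeet subv_cap Phi_hxy /=.
  case: n => [|n]; first exact: Phi_top.
  by rewrite PhiJoin addvSl.
- apply: phi_hom_of => F vT X Y; case: n => [|n]; first exact: Phi_top.
  by rewrite PhiJoin (subv_trans (Phi_hxy _ _ _) (addvSl _ _)).
- move=> F vT X Y _ p hp.
  have hp' := Phi_sound X Y hp; rewrite PhiMeet in hp'.
  rewrite !PhiMeet.
  set A := PhiPlus X Y (A_at n i j k); set P := PhiPlus X Y p in hp' *;
  set G := PhiPlus X Y (Gy k) in hp' *.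
  have -> : (A :&: P)%VS = (G :&: A :&: P)%VS.
    by rewrite -{1}hp' (capvC P G) capvA (capvC A G).
  apply: (img_cap (W := G)); rewrite ?capvSl //.
    by rewrite -hp' capvSr.
  rewrite subv_cap capvSr /=.
  have h1 : (lker (varphi j) :&: G <= PhiPlus X Y (Gx j) :&: G)%VS.
    rewrite subv_cap capvSr andbT; apply: subv_trans (kerX X Y j).
    exact: capvS (subvv _) (Phi_top X Y _).
  apply: subv_trans h1 _; rewrite {}/A; case: n => [|n]; first exact: subv_trans (capvSl _ _) (Phi_top _ _ _).
  rewrite PhiJoin; apply: subv_trans (addvSr _ _); rewrite PhiMeet.
  apply: capvS (subvv _) _; case: n => [|n]; first exact: Phi_top.
  by rewrite PhiJoin addvSl.
Qed.
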